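(* Let $P(z)=z^2-bz+c$ with $(b,c)\in\mathbb{C}^2$. Then $P$ has one root of modulus $1$ and the other root of modulus at most $1$ if and only if $|c|^2-\frac12|b|^2-\frac12|b^2-4c|+1=0$ and $|c|\leq1$. *)

(* Defs.v *)
From HB Require Import structures.
From mathcomp Require Import all_boot all_order all_algebra.
From mathcomp Require Export complex.
Set Implicit Arguments. Unset Strict Implicit. Unset Printing Implicit Defensive.
Import Order.TTheory GRing.Theory Num.Theory.
Local Open Scope ring_scope.

Definition quadP (R : rcfType) (b c : R[i]) : {poly R[i]} :=
  'X^2 - b *: 'X + c%:P.

(* Main.v *)
Require Import Defs.
From HB Require Import structures.
From mathcomp Require Import all_boot all_order all_algebra complex ring.
Import Order.TTheory GRing.Theory Num.Theory.
Local Open Scope ring_scope.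

Lemma fact_eq (R : rcfType) (z1 z2 : R[i]) :
  ('X - z1%:P) * ('X - z2%:P) = quadP (z1 + z2) (z1 * z2).
Proof. rewrite /quadP -mul_polyC polyCD polyCM; ring. Qed.

Lemma coefs (R : rcfType) (b c z1 z2 : R[i]) :
  quadP b c = ('X - z1%:P) * ('X - z2%:P) -> b = z1 + z2 /\ c = z1 * z2.
Proof.
move=> H.
have H0 := congr1 (fun p => p.[0]) H.
have H1 := congr1 (fun p => p.[1]) H.
rewrite /= /quadP !hornerE in H0 H1.
have Hc : c = z1 * z2 by transitivity (0 ^+ 2 - 0 + c); [ring | rewrite H0; ring].
split=> //.
move: H1; rewrite Hc => H1.
transitivity (b + ((1 ^+ 2 - b + z1 * z2) - (1 - z1) * (1 - z2))); first by rewrite H1 subrr addr0.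
ring.
Qed.

Lemma key (R : rcfType) (z1 z2 : R[i]) :
  `|z1 * z2| ^+ 2 - 2^-1 * `|z1 + z2| ^+ 2 - 2^-1 * `|(z1 + z2) ^+ 2 - 4 * (z1 * z2)| + 1
  = (1 - `|z1| ^+ 2) * (1 - `|z2| ^+ 2).
Proof.
have -> : (z1 + z2) ^+ 2 - 4 * (z1 * z2) = (z1 - z2) ^+ 2 by ring.
rewrite normrX !normCK !rmorphM rmorphD rmorphB /=.
have h2 : (2 : R[i]) != 0 by rewrite pnatr_eq0.
have h4 : (4 : R[i]) != 0 by rewrite pnatr_eq0.
by field.
Qed.

Lemma roots_of (R : rcfType) (b c d : R[i]) : d ^+ 2 = b ^+ 2 - 4 * c ->
  b = (b + d) / 2 + (b - d) / 2 /\ c = ((b + d) / 2) * ((b - d) / 2).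
Proof.
move=> hd.
have h2 : (2 : R[i]) != 0 by rewrite pnatr_eq0.
have h4 : (4 : R[i]) != 0 by rewrite pnatr_eq0.
split; first by field.
transitivity ((b ^+ 2 - (b ^+ 2 - 4 * c)) / 4); first by field.
by rewrite -hd; field.
Qed.

Lemma norm1 (R : rcfType) (z : R[i]) : 1 - `|z| ^+ 2 = 0 -> `|z| = 1.
Proof.
move/eqP; rewrite subr_eq0 eq_sym sqrf_eq1 => /orP[/eqP //|/eqP h].
by have := normr_ge0 z; rewrite h ler0N1.
Qed.

Theorem proposition3p2 (R : rcfType) (b c : R[i]) :
  (exists z1 z2 : R[i],
      quadP b c = ('X - z1%:P) * ('X - z2%:P) /\ `|z1| = 1 /\ `|z2| <= 1)
  <->
  (`|c| ^+ 2 - 2^-1 * `|b| ^+ 2 - 2^-1 * `|b ^+ 2 - 4 * c| + 1 = 0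
   /\ `|c| <= 1).
Proof.
split.
  move=> [z1 [z2 [H [n1 n2]]]].
  have [-> ->] := @coefs R b c z1 z2 H.
  rewrite key n1 expr1n subrr mul0r normrM n1 mul1r; split=> //.
move=> [E hc].
have [z1 [z2 [Hb Hc]]] : exists z1 z2 : R[i], b = z1 + z2 /\ c = z1 * z2.
  have hd : sqrtC (b ^+ 2 - 4 * c) ^+ 2 = b ^+ 2 - 4 * c by rewrite sqrtCK.
  move: (sqrtC _) hd => d hd.
  exists ((b + d) / 2), ((b - d) / 2); exact: roots_of hd.
have HP : quadP b c = ('X - z1%:P) * ('X - z2%:P) by rewrite fact_eq -Hb -Hc.
have E' : (1 - `|z1| ^+ 2) * (1 - `|z2| ^+ 2) = 0 by rewrite -key -Hb -Hc.
move/eqP: E'; rewrite mulf_eq0 => /orP[/eqP/norm1 n1|/eqP/norm1 n2].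
  exists z1, z2; split=> //; split=> //.
  by move: hc; rewrite Hc normrM n1 mul1r.
exists z2, z1; split; first by rewrite HP mulrC.
split=> //.
by move: hc; rewrite Hc normrM n2 mulr1.
Qed.
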